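(* There is an RB-function $f_{scc}$ with the following property: for every conservative $d$-dim Petri net $A$, every bottom SCC $X$ of $A$, and every $I\subseteq[1,d]$, writing $G=G_{(X,I)}=(Q,A,E)$ and $J=[1,d]\setminus I$, if there is $x\in X$ with $x(j)\geq f_{scc}(\|G\|,d)$ for all $j\in J$, then $G$ is proper.
   Context: A $d$-dim Petri net $A$ is a finite set of actions $(a_-,a_+)\in\mathbb{N}^d\times\mathbb{N}^d$; $\|A\|$ is the maximum of all entries of all $a_-,a_+$. Steps $x\xrightarrow{a}y$ iff $x=c+a_-$, $y=c+a_+$ for some $c\in\mathbb{N}^d$; $\xrightarrow{*}$ is the reflexive-transitive closure. $A$ is conservative if some $w\in(\mathbb{N}_+)^d$ has $\langle a_+-a_-,w\rangle=0$ for all actions. A bottom SCC of a net is a nonempty set $X$ of configurations with $\{y\mid x\xrightarrow{*}y\}=X$ for all $x\in X$. For $I\subseteq[1,d]$ and $x\in\mathbb{Z}^d$, $x|_I$ is the restriction to components in $I$; $X|_I=\{x|_I\mid x\in X\}$; $A|_I$ is the $|I|$-dim net with actions $((a_-)|_I,(a_+)|_I)$. The Petri net with states $G_{(X,I)}=(Q,A,E)$ has state set $Q=X|_I$ and edges $E=\{(p,a,q)\in Q\times A\times Q\mid p\xrightarrow{a}q\text{ in }A|_I\}$; $\|G\|=\max\{\|Q\|,\|A\|\}$ where $\|Q\|$ is the maximal component of elements of $Q$. $G$ is proper if $Q$ is a bottom SCC of the net $A|_I$. A function $f:\mathbb{N}^2\to\mathbb{N}$ is an RB-function if there are $c\in\mathbb{N}$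 and a polynomial $p$ with $f(m,d)\leq(c+m)^{2^{p(d)}}$ for all $m,d$. *)

(* Defs.v *)
From HB Require Import structures.
From mathcomp Require Import all_boot all_order all_algebra.
From Stdlib Require Import Relations.
Set Implicit Arguments. Unset Strict Implicit. Unset Printing Implicit Defensive.
Import Order.TTheory GRing.Theory Num.Theory.

Definition config (d : nat) := {ffun 'I_d -> nat}.
(* An action is a pair (a_-, a_+). *)
Definition action (d : nat) := (config d * config d)%type.
Definition net (d : nat) := seq (action d).

(* ||A|| : the maximum of all entries of all a_-, a_+ (0 for the empty net). *)
Definition net_norm d (A : net d) : nat :=
  \max_(a <- A) \max_(i < d) maxn (a.1 i) (a.2 i).

Definition step d (A : net d) (x y : config d) : Prop :=
  exists2 a, a \in A &
    exists c : config d, forall i, x i = c i + a.1 i /\ y i = c i + a.2 i.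

Definition reach d (A : net d) : relation (config d) :=
  clos_refl_trans (config d) (step A).

Definition conservative d (A : net d) : Prop :=
  exists w : 'I_d -> nat, (forall i, 0 < w i)%N /\
    forall a, a \in A ->
      (\sum_(i < d) ((a.2 i)%:Z - (a.1 i)%:Z) * (w i)%:Z = 0)%R.

Definition bottom_scc d (A : net d) (X : config d -> Prop) : Prop :=
  (exists x, X x) /\ forall x, X x -> forall y, reach A x y <-> X y.

(* Restriction x|_I, as an |I|-dimensional vector (components of I in
   increasing order). *)
Definition restr d (I : {set 'I_d}) (x : config d) : config #|I| :=
  [ffun k : 'I_#|I| => x (enum_val k)].

Arguments restr {d} I x.

Definition restr_net d (I : {set 'I_d}) (A : net d) : net #|I| :=
  map (fun a : action d => (restr I a.1, restr I a.2)) A.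

Arguments restr_net {d} I A.

Definition restr_set d (I : {set 'I_d}) (X : config d -> Prop)
  : config #|I| -> Prop :=
  fun q => exists2 x, X x & restr I x = q.

Arguments restr_set {d} I X _.

(* G_(X,I) = (Q, A, E) with Q = X|_I is proper iff Q is a bottom SCC of A|_I *)
Definition G_proper d (A : net d) (X : config d -> Prop) (I : {set 'I_d}) : Prop :=
  bottom_scc (restr_net I A) (restr_set I X).

Definition G_upper d (A : net d) (X : config d -> Prop) (I : {set 'I_d}) (m : nat)
  : Prop :=
  (forall q, restr_set I X q -> forall k, (q k <= m)%N) /\ (net_norm A <= m)%N.

(* m = ||G|| = max(||Q||, ||A||), i.e. the least upper bound of all
   components of elements of Q and all entries of A. *)
Definition G_norm_is d (A : net d) (X : config d -> Prop) (I : {set 'I_d}) (m : nat)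
  : Prop :=
  G_upper A X I m /\ forall m', G_upper A X I m' -> (m <= m')%N.

Definition RB_function (f : nat -> nat -> nat) : Prop :=
  exists (c : nat) (p : {poly nat}),
    forall m d, (f m d <= (c + m) ^ (2 ^ p.[d]%R))%N.

(* Main.v *)
Require Import Defs.
From mathcomp Require Import all_boot all_order all_algebra.
From mathcomp Require Import zify.
From Stdlib Require Import ClassicalEpsilon Relations.
Set Implicit Arguments. Unset Strict Implicit.

Lemma net_norm_le d (A : net d) a j : a \in A ->
  a.1 j <= net_norm A /\ a.2 j <= net_norm A.
Proof.
move=> aA.
have H1 : maxn (a.1 j) (a.2 j) <= \max_(i < d) maxn (a.1 i) (a.2 i)
  by apply: (leq_bigmax j).
have H2 : \max_(i < d) maxn (a.1 i) (a.2 i) <= net_norm A.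
  by rewrite /net_norm; apply: (@leq_bigmax_seq _ _ xpredT (fun a : action d => \max_(i < d) maxn (a.1 i) (a.2 i)) a).
have := leq_maxl (a.1 j) (a.2 j); have := leq_maxr (a.1 j) (a.2 j).
lia.
Qed.

Lemma step_restr d (A : net d) (I : {set 'I_d}) x y :
  step A x y -> step (restr_net I A) (restr I x) (restr I y).
Proof.
case=> a aA [c Hc]; exists (restr I a.1, restr I a.2).
  by apply/mapP; exists a.
exists (restr I c) => k /=; rewrite !ffunE; exact: Hc.
Qed.

Lemma reach_restr d (A : net d) (I : {set 'I_d}) x y :
  reach A x y -> reach (restr_net I A) (restr I x) (restr I y).
Proof.
elim=> [u v /(step_restr I) H| u | u v w _ H1 _ H2].
- exact: rt_step.
- exact: rt_refl.
- exact: rt_trans H2.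
Qed.

Lemma lift1 d (A : net d) (X : config d -> Prop) (I : {set 'I_d}) m y r :
  bottom_scc A X -> net_norm A <= m -> X y ->
  (forall j, j \notin I -> m <= y j) ->
  step (restr_net I A) (restr I y) r ->
  exists2 y', X y' & restr I y' = r /\ forall j, j \notin I -> y j <= y' j + m.
Proof.
move=> [_ HX] Hm Xy HJ [a' /mapP[a aA ->] [c' Hc']].
have Hge : forall j, a.1 j <= y j.
  move=> j; case: (boolP (j \in I)) => jI.
  - have := Hc' (enum_rank_in jI j); rewrite /= !ffunE enum_rankK_in //.
    move=> [-> _]; exact: leq_addl.
  - have [h _] := net_norm_le j aA; have := HJ j jI; lia.
pose y' : config d := [ffun j => y j - a.1 j + a.2 j].
have st : step A y y'.
  exists a => //; exists [ffun j => y j - a.1 j] => j; rewrite !ffunE.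
  by split=> //; rewrite subnK.
exists y'.
  by apply/(HX _ Xy); apply: rt_step.
split.
- apply/ffunP => k; rewrite !ffunE.
  have := Hc' k; rewrite /= !ffunE => -[-> ->]. rewrite addnK. done.
- move=> j _; rewrite ffunE; have [h1 h2] := net_norm_le j aA; have := Hge j; lia.
Qed.

Definition pb (P : Prop) : bool := if excluded_middle_informative P then true else false.
Lemma pbP (P : Prop) : reflect P (pb P).
Proof. by rewrite /pb; case: excluded_middle_informative => h; constructor. Qed.

Definition toB k m (v : config k) : {ffun 'I_k -> 'I_m.+1} := [ffun i => inord (v i)].
Definition valB k m (u : {ffun 'I_k -> 'I_m.+1}) : config k := [ffun i => nat_of_ord (u i)].

Lemma valB_toB k m (v : config k) : (forall i, v i <= m) -> valB (toB m v) = v.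
Proof. by move=> H; apply/ffunP => i; rewrite !ffunE inordK // ltnS. Qed.

Definition eB d (A : net d) (I : {set 'I_d}) m : rel {ffun 'I_#|I| -> 'I_m.+1} :=
  fun u v => pb (step (restr_net I A) (valB u) (valB v)).

Arguments eB {d} A I m.
Arguments toB {k} m v.
Arguments valB {k m} u.

Lemma path_of_run d (A : net d) (X : config d -> Prop) (I : {set 'I_d}) m x0 x1 :
  bottom_scc A X -> (forall q, restr_set I X q -> forall k, q k <= m) ->
  clos_refl_trans_1n _ (step A) x0 x1 -> X x0 ->
  exists s, path (eB A I m) (toB m (restr I x0)) s /\
            last (toB m (restr I x0)) s = toB m (restr I x1).
Proof.
move=> [_ HX] Hb; elim=> [u|u v w st _ IH] Xu.
  by exists [::].
have Xv : X v by apply/(HX _ Xu); apply: rt_step.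
have [s [ps ls]] := IH Xv.
exists (toB m (restr I v) :: s); split => //=.
rewrite ps andbT; apply/pbP.
rewrite !valB_toB; first exact: step_restr.
- by apply: Hb; exists v.
- by apply: Hb; exists u.
Qed.

Lemma lift_path d (A : net d) (X : config d -> Prop) (I : {set 'I_d}) m :
  bottom_scc A X -> net_norm A <= m ->
  forall s u y, X y -> restr I y = valB u ->
  (forall j, j \notin I -> m * (size s).+1 <= y j) ->
  path (eB A I m) u s ->
  exists2 z, X z & restr I z = valB (last u s) /\ forall j, j \notin I -> m <= z j.
Proof.
move=> HX Hm; elim=> [|v s IH] u y Xy ry Hy /=.
  by move=> _; exists y => //; split => // j /Hy; rewrite muln1.
move=> /andP[/pbP st ps].
rewrite -ry in st.
have Hy' : forall j, j \notin I -> m <= y j.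
  by move=> j /Hy; apply: leq_trans; rewrite leq_pmulr.
have [y' Xy' [ry' Hy'']] := lift1 HX Hm Xy Hy' st.
apply: (IH v y') => // j jI; have := Hy j jI; have := Hy'' j jI.
rewrite /=; lia.
Qed.

Lemma core d (A : net d) (X : config d -> Prop) (I : {set 'I_d}) m x :
  bottom_scc A X -> (forall q, restr_set I X q -> forall k, q k <= m) ->
  net_norm A <= m -> X x -> (forall j, j \notin I -> m * m.+1 ^ d <= x j) ->
  forall q, restr_set I X q ->
  exists2 z, X z & restr I z = q /\ forall j, j \notin I -> m <= z j.
Proof.
move=> HX Hb Hm Xx Hx q [x1 Xx1 <-].
have rx : reach A x x1 by apply/(HX.2 _ Xx).
have [s [ps ls]] := path_of_run HX Hb (clos_rt_rt1n _ _ _ _ rx) Xx.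
move: ls; case: (shortenP ps) => s' ps' us' _ ls'.
have sz : (size s').+1 <= m.+1 ^ d.
  have h := card_uniqP us'.
  have -> : (size s').+1 = size (toB m (restr I x) :: s') by [].
  rewrite -h.
  apply: leq_trans (max_card _) _; rewrite card_ffun card_ord.
  apply: leq_pexp2l => //.
  have := max_card (mem I); rewrite card_ord.
  by rewrite card_ord.
have Hx' : forall j, j \notin I -> m * (size s').+1 <= x j.
  move=> j /Hx; apply: leq_trans; exact: leq_mul.
have [z Xz [rz Hz]] := lift_path HX Hm Xx (esym (valB_toB (Hb _ (ex_intro2 _ _ x Xx erefl)))) Hx' ps'.
exists z => //; split => //; rewrite rz ls' valB_toB //.
by apply: Hb; exists x1.
Qed.

Theorem proposition11 :
  exists f_scc : nat -> nat -> nat, RB_function f_scc /\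
    forall (d : nat) (A : net d) (X : config d -> Prop) (I : {set 'I_d}) (m : nat),
      conservative A -> bottom_scc A X -> G_norm_is A X I m ->
      (exists2 x, X x & forall j : 'I_d, j \notin I -> (f_scc m d <= x j)%N) ->
      G_proper A X I.
Proof.
exists (fun m d => m * m.+1 ^ d); split.
  exists 1, 'X%R => m d; rewrite hornerX add1n.
  apply: (@leq_trans (m.+1 ^ d.+1)); first by rewrite expnS leq_mul2r leqnSn orbT.
  by apply: leq_pexp2l => //; apply: ltn_expl.
move=> d A X I m _ HX [[Hb Hm] _] [x Xx Hx].
split; first by exists (restr I x); exists x.
move=> q [x1 Xx1 <-] r; split.
- move=> h0; have h := clos_rt_rt1n _ _ _ _ h0.
  have : restr_set I X (restr I x1) by exists x1.
  move: h; clear h0; move: (restr I x1) => q0 h; elim: h => [//|u v w st _ IH] Qu.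
  apply: IH.
  have [z Xz [rz Hz]] := core HX Hb Hm Xx Hx Qu.
  rewrite -rz in st.
  have [y' Xy' [ry' _]] := lift1 HX Hm Xz Hz st.
  by exists y'.
- move=> [y Xy <-]; apply: reach_restr; exact/(HX.2 _ Xx1).
Qed.
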